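(* Let $(A,m)$ be a strict $A_\infty$-algebra over a field $\mathbf{F}$, and let $m=\sum_{k\ge1}m_k\in\prod_{k}C^{k,2-k}(A,A)$. Then the class of $m$ in the Hochschild cohomology vanishes: $[m]=0\in \mathrm{HH}^2(A,A)$, i.e. there exists a cochain $a$ of total degree $1$ with $D(a)=[m,a]=m$.
   Context: A strict $A_\infty$-algebra $(A,m)$ over $\mathbf{F}$ is a $\mathbf{Z}$-graded vector space $A=\bigoplus_{k\in\mathbf{Z}}A^k$ with graded linear maps $m_n:A^{\otimes n}\to A$ ($n\ge1$) of degree $2-n$ satisfying, for every $n\ge1$, $\sum_{n=r+s+t}(-1)^{rs+t}m_{r+1+t}(\mathbf{I}^{\otimes r}\otimes m_s\otimes \mathbf{I}^{\otimes t})=0$ (with $r,t\ge0$, $s\ge1$), where tensor products of graded maps are evaluated with the Koszul sign rule $(f\otimes g)(x\otimes y)=(-1)^{|g||x|}f(x)\otimes g(y)$. Let $C^{n,k}(A,A)=\mathrm{Hom}^k(A^{\otimes n},A)=\prod_i\mathrm{Hom}((A^{\otimes n})^i,A^{i+k})$ (with $A^{\otimes 0}=\mathbf{F}$, so $C^{0,k}\cong A^k$); its total degree is $n+k$. For $f\in C^{n,k}$, $g\in C^{m,l}$ the Gerstenhaber bracket $[f,g]\in C^{n+m-1,k+l}$ is $[f,g]=\sum_{i=0}^{n-1}(-1)^{\delta_1}f(\mathbf{I}^{\otimes i}\otimes g\otimes \mathbf{I}^{\otimes n-i-1})-(-1)^{(n+k-1)(m+l-1)}\sum_{i=0}^{m-1}(-1)^{\delta_2}g(\mathbf{I}^{\otimes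 i}\otimes f\otimes\mathbf{I}^{\otimes m-i-1})$, where $\delta_1=(n-1)(m-1)+(n-1)l+i(m-1)$, $\delta_2=(m-1)(n-1)+(m-1)k+i(n-1)$, and an empty sum is $0$; it is extended bilinearly to products of such spaces. Since $m_k\in C^{k,2-k}$, $m$ has total degree $2$, $[m,m]=0$, and $D=[m,-]$ is a differential on $\prod C^{*,*}(A,A)$. The Hochschild cohomology is $\mathrm{HH}^*(A,A)=H^*(\prod_iC^{i,*-i}(A,A),D)$. *)

(* Defs.v *)
From HB Require Import structures.
From mathcomp Require Import all_boot all_order all_algebra zify.
Set Implicit Arguments. Unset Strict Implicit. Unset Printing Implicit Defensive.
Import Order.TTheory GRing.Theory Num.Theory.
Local Open Scope ring_scope.

(* A Z-graded vector space over F is given by its homogeneous components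
   A : int -> lmodType F  (A = \bigoplus_k A k). *)

Definition sumz (s : seq int) : int := foldr (fun a b => a + b) 0 s.

(* a homogeneous elementary tensor x_1 (x) ... (x) x_n with |x_j| = s_j *)
Fixpoint args (A : int -> Type) (s : seq int) : Type :=
  match s with
  | [::] => unit
  | i :: s' => (A i * args A s')%type
  end.

Fixpoint app_args (A : int -> Type) (s1 s2 : seq int) :
    args A s1 -> args A s2 -> args A (s1 ++ s2) :=
  match s1 return args A s1 -> args A s2 -> args A (s1 ++ s2) with
  | [::] => fun _ y => y
  | i :: s1' => fun x y => (x.1, app_args x.2 y)
  end.

Fixpoint split_args (A : int -> Type) (n : nat) (s : seq int) :
    args A s -> (args A (take n s) * args A (drop n s))%type :=
  match s return args A s -> (args A (take n s) * args A (drop n s))%type with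
  | [::] => fun x => (tt, x)
  | i :: s' =>
      match n return args A (i :: s') ->
                     (args A (take n (i :: s')) * args A (drop n (i :: s')))%type with
      | 0 => fun x => (tt, x)
      | n'.+1 => fun x => let y := split_args n' x.2 in ((x.1, y.1), y.2)
      end
  end.

Definition tr (A : int -> Type) (i j : int) (e : i = j) (x : A i) : A j :=
  eq_rect i A x j e.

(* A cochain of total degree t:  an element of  prod_n C^{n, t-n}(A,A).
   Hom((A^{(x)n})^i, A^{i+k}) is encoded by the universal property of the
   tensor product: a family of multilinear maps on homogeneous components. *)
Definition cochain (F : fieldType) (A : int -> lmodType F) (t : int) :=
  forall s : seq int, args A s -> A (sumz s + (t - (size s)%:Z)).

Definition multilinear (F : fieldType) (A : int -> lmodType F) (t : int)
    (f : cochain A t) : Prop :=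
  forall (s1 : seq int) (i : int) (s2 : seq int) (x1 : args A s1) (x2 : args A s2),
    linear (fun v : A i =>
      f (s1 ++ i :: s2) (app_args (s2 := i :: s2) x1 ((v, x2) : args A (i :: s2)))).

Definition ksign (F : fieldType) (z : int) : F := if odd (absz z) then -1 else 1.

Lemma ins_deg (tf tg t : int) (e : tf + tg - 1 = t) (i p : nat) (s : seq int) :
  let s2 := take p (drop i s) in
  let d := sumz s2 + (tg - (size s2)%:Z) in
  let s' := take i s ++ d :: drop p (drop i s) in
  sumz s' + (tf - (size s')%:Z) = sumz s + (t - (size s)%:Z).
Proof.
move=> s2 d s'; rewrite -e /s' /d /s2.
have sc : forall u v : seq int, sumz (u ++ v) = sumz u + sumz v.
  by elim=> [|a u IH] v /=; rewrite ?add0r // IH addrA.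
rewrite sc /=.
rewrite -[in RHS](cat_take_drop i s) -[in RHS](cat_take_drop p (drop i s)).
rewrite !sc !size_cat /=.
lia.
Qed.

Lemma degC (tf tg t : int) : tf + tg - 1 = t -> tg + tf - 1 = t.
Proof. by move=> <-; rewrite (addrC tg). Qed.

Section Cochains.
Variables (F : fieldType) (A : int -> lmodType F).

(* Insertion  f(I^{(x) i} (x) g (x) I^{(x) rest})  of the arity-p component of g
   (total degree tg, internal degree tg - p) into the appropriate component of f
   (total degree tf), evaluated on a homogeneous tensor x of degrees s with the
   Koszul sign  (-1)^{(tg - p)(|x_1| + ... + |x_i|)}. *)
Definition ins (tf tg t : int) (e : tf + tg - 1 = t)
    (f : cochain A tf) (g : cochain A tg) (i p : nat) (s : seq int) (x : args A s) :
    A (sumz s + (t - (size s)%:Z)) :=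
  let x1x23 := split_args i x in
  let x2x3 := split_args p x1x23.2 in
  let y := g _ x2x3.1 in
  tr (A := fun d => A d) (ins_deg e i p s)
    (ksign F ((tg - p%:Z) * sumz (take i s)) *:
       f _ (app_args (s2 := _ :: _) x1x23.1 ((y, x2x3.2) : args A (_ :: _)))).

(* The Gerstenhaber bracket of a cochain f of total degree tf with a cochain g of
   total degree tg (extended bilinearly over the components f_n in C^{n,tf-n},
   g_m in C^{m,tg-m}); the arity-N component of [f,g] is the sum of [f_n,g_m]
   over n + m - 1 = N. *)
Definition brk (tf tg t : int) (e : tf + tg - 1 = t)
    (f : cochain A tf) (g : cochain A tg) : cochain A t :=
  fun s x =>
  \sum_(m < (size s).+2)
    let n := ((size s).+1 - m)%N in
    let k := tf - n%:Z in
    let l := tg - m%:Z in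
    (\sum_(i < n)
        ksign F ((n%:Z - 1) * (m%:Z - 1) + (n%:Z - 1) * l + i%:Z * (m%:Z - 1)) *:
          ins e f g i m x)
    - ksign F ((tf - 1) * (tg - 1)) *:
      (\sum_(i < m)
        ksign F ((m%:Z - 1) * (n%:Z - 1) + (m%:Z - 1) * k + i%:Z * (n%:Z - 1)) *:
          ins (degC e) g f i n x).

End Cochains.

Lemma deg_mm : (2 : int) + 2 - 1 = 3. Proof. lia. Qed.
Lemma deg_ma : (2 : int) + 1 - 1 = 2. Proof. lia. Qed.

(* (A, m) is a strict A-infinity algebra: m = (m_n)_n is a multilinear cochain of
   total degree 2 (so m_n has degree 2 - n), m_0 = 0, and for every n >= 1
     sum_{r+s+t=n, s>=1} (-1)^{rs+t} m_{r+1+t}(I^{(x)r} (x) m_s (x) I^{(x)t}) = 0. *)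
Definition strict_Ainf (F : fieldType) (A : int -> lmodType F) (m : cochain A 2) : Prop :=
  [/\ multilinear m,
      m [::] tt = 0 &
      forall (s : seq int) (x : args A s), (0 < size s)%N ->
        \sum_(p < (size s).+1 | (0 < p)%N)
          \sum_(r < (size s - p).+1)
            ksign F (r%:Z * p%:Z + (size s - p - r)%N%:Z) *:
              ins deg_mm m m r p x = 0].

(* Main.v *)
Require Import Defs.
From HB Require Import structures.
From mathcomp Require Import all_boot all_order all_algebra zify.
Import GRing.Theory.
Local Open Scope ring_scope.
Set Implicit Arguments. Unset Strict Implicit. Unset Printing Implicit Defensive.

Section Aux.
Variables (F : fieldType) (A : int -> lmodType F).

Definition castA (s1 s2 : seq int) (E : s1 = s2) (z : args A s1) : args A s2 :=
  eq_rect s1 (args A) z s2 E.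

Lemma fcast t (f : cochain A t) s1 s2 (E : s1 = s2) (z : args A s1)
  (e : sumz s1 + (t - (size s1)%:Z) = sumz s2 + (t - (size s2)%:Z)) :
  tr (A := fun d => A d) e (f s1 z) = f s2 (castA E z).
Proof. by destruct E; rewrite (eq_irrelevance e erefl). Qed.

Lemma tr_id (i : int) (e : i = i) (u : A i) : tr (A := fun d => A d) e u = u.
Proof. by rewrite (eq_irrelevance e erefl). Qed.

Lemma tr_comp (i j k : int) (e1 : i = j) (e2 : j = k) (u : A i) :
  tr (A := fun d => A d) e2 (tr (A := fun d => A d) e1 u) =
  tr (A := fun d => A d) (etrans e1 e2) u.
Proof. by destruct e1; destruct e2. Qed.

Lemma tr_scale (i j : int) (e : i = j) (c : F) (u : A i) :
  tr (A := fun d => A d) e (c *: u) = c *: tr (A := fun d => A d) e u.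
Proof. by destruct e. Qed.

Lemma tr0 (i j : int) (e : i = j) : tr (A := fun d => A d) e 0 = 0.
Proof. by destruct e. Qed.

Lemma castA_head j d r (e : j = d) (E : j :: r = d :: r) (v : A j) (y : args A r) :
  castA E ((v, y) : args A (j :: r)) = ((tr (A := fun d => A d) e v, y) : args A (d :: r)).
Proof. by destruct e; rewrite (eq_irrelevance E erefl). Qed.

Lemma castA_cons j r1 r2 (E' : r1 = r2) (E : j :: r1 = j :: r2) (v : A j) (y : args A r1) :
  castA E ((v, y) : args A (j :: r1)) = ((v, castA E' y) : args A (j :: r2)).
Proof. by destruct E'; rewrite (eq_irrelevance E erefl). Qed.


Lemma linZ (V W : lmodType F) (g : V -> W) : linear g -> forall c v, g (c *: v) = c *: g v.
Proof.
move=> hg c v.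
have g0 : g 0 = 0.
  have := hg 1 0 0; rewrite !scale1r addr0 => h.
  by apply: (@addrI _ (g 0)); rewrite addr0 -h.
by have := hg c v 0; rewrite addr0 g0 addr0.
Qed.

Lemma linZ0 (V W : lmodType F) (g : V -> W) : linear g -> g 0 = 0.
Proof. by move=> hg; rewrite -(scale0r (0 : V)) (linZ hg) scale0r. Qed.

End Aux.

Section Main.
Variables (F : fieldType) (A : int -> lmodType F).

Lemma ea (j : int) : j = sumz [:: j] + (1 - (size [:: j])%:Z).
Proof. rewrite /=; lia. Qed.

Definition acoch : cochain A 1 := fun s =>
  match s return args A s -> A (sumz s + (1 - (size s)%:Z)) with
  | [:: j] => fun x => tr (A := fun d => A d) (ea j) (((1 - j)%:~R : F) *: x.1)
  | _ => fun _ => 0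
  end.

Arguments acoch : simpl never.

Lemma tr_lin (i j : int) (e : i = j) (c : F) :
  linear (fun v : A i => tr (A := fun d => A d) e (c *: v)).
Proof. by destruct e => a u v; rewrite /tr /= scalerDr !scalerA mulrC. Qed.

Lemma acoch_ml : multilinear acoch.
Proof.
move=> s1 i s2 x1 x2; case: s1 x1 => [|j [|k s1]] x1 /=; try by move=> a u v /=; rewrite scaler0 addr0.
case: s2 x2 => [|k s2] x2 /=; last by move=> a u v /=; rewrite scaler0 addr0.
exact: tr_lin.
Qed.

Lemma a_zero s (z : args A s) : size s != 1%N -> acoch z = 0.
Proof. by case: s z => [|j [|k r]] z. Qed.

Fixpoint scale_nth (s : seq int) : nat -> args A s -> args A s :=
  match s return nat -> args A s -> args A s with
  | [::] => fun _ x => x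
  | j :: r => fun i x => match i with
     | 0 => ((((1 - j)%:~R : F) *: x.1, x.2) : args A (j :: r))
     | i'.+1 => ((x.1, scale_nth i' x.2) : args A (j :: r)) end
  end.

Lemma decomp s i (x : args A s) : (i < size s)%N ->
  exists s1 j s2 (E : s1 ++ j :: s2 = s) (x1 : args A s1) (v : A j) (x2 : args A s2),
  [/\ x = castA E (app_args x1 ((v, x2) : args A (j :: s2))),
      scale_nth i x = castA E (app_args x1 ((((1 - j)%:~R : F) *: v, x2) : args A (j :: s2)))
    & j = nth 0 s i].
Proof.
elim: s i x => [|j r IH] [|i] x //= hi.
- by exists [::], j, r, erefl, tt, x.1, x.2; case: x.
- case: x => x0 x' /=.
  case: (IH i x' hi) => s1 [j' [s2 [E [x1 [v [x2 [h1 h2 h3]]]]]]].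
  exists (j :: s1), j', s2, (congr1 (cons j) E), (x0, x1), v, x2.
  by rewrite /= !(castA_cons E) -h1 -h2.
Qed.

Lemma scale_lin t (f : cochain A t) : multilinear f -> forall s i (x : args A s),
  (i < size s)%N -> f s (scale_nth i x) = ((1 - nth 0 s i)%:~R : F) *: f s x.
Proof.
move=> hf s i x hi; case: (decomp x hi) => s1 [j [s2 [E [x1 [v [x2 [h1 h2 h3]]]]]]].
rewrite h2 h1 -h3 -!(fcast f E _ (congr1 (fun s => sumz s + (t - (size s)%:Z)) E)).
by rewrite (linZ (hf _ _ _ x1 x2)) tr_scale.
Qed.

Lemma phi_cast s i (x : args A s) : (i < size s)%N ->
 exists E : s = take i s ++ (sumz (take 1 (drop i s)) + (1 - (size (take 1 (drop i s)))%:Z)) :: drop 1 (drop i s),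
   app_args (s2 := _ :: _) (split_args i x).1
     ((acoch (split_args 1 (split_args i x).2).1, (split_args 1 (split_args i x).2).2) : args A (_ :: _))
   = castA E (scale_nth i x).
Proof.
elim: s i x => [|j r IH] [|i] x //= hi.
- case: r x {IH hi} => [|k r] x /=.
  + have E := congr1 (fun d => d :: [::]) (ea j); exists E.
    by rewrite (castA_head (ea j)); case: x => ? [].
  + have E := congr1 (fun d => d :: (k :: r)) (ea j); exists E.
    by rewrite (castA_head (ea j)); case: x.
- case: x => x0 x' /=.
  case: (IH i x' hi) => E' h.
  exists (congr1 (cons j) E').
  by rewrite (castA_cons E') -h.
Qed.

Lemma split_size s (x : args A s) :
  exists E : s = take (size s) s, (split_args (size s) x).1 = castA E x.
Proof.
elim: s x => [|j r IH] x /=; first by exists erefl; case: x.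
case: x => x0 x'; case: (IH x') => E' h.
exists (congr1 (cons j) E'); by rewrite /= (castA_cons E') -h.
Qed.

Lemma a_single d r (y : A d) (z : args A r) : size r = 0%N ->
  exists e, acoch ((y, z) : args A (d :: r)) = tr (A := fun d => A d) e (((1 - d)%:~R : F) *: y).
Proof. by case: r z => // z _; exists (ea d). Qed.

Lemma ml0 t (f : cochain A t) : multilinear f -> forall s1 i s2 (x1 : args A s1) (x2 : args A s2),
  f _ (app_args (s2 := i :: s2) x1 (((0 : A i), x2) : args A (i :: s2))) = 0.
Proof. move=> hf s1 i s2 x1 x2; exact: (linZ0 (hf s1 i s2 x1 x2)). Qed.

Lemma term1 (m : cochain A 2) : multilinear m -> forall s (x : args A s) i, (i < size s)%N ->
  ins deg_ma m acoch i 1 x = ((1 - nth 0 s i)%:~R : F) *: m s x.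
Proof.
move=> hml s x i hi; rewrite /ins.
case: (phi_cast x hi) => E h.
rewrite h -(fcast m E _ (congr1 (fun s => sumz s + (2 - (size s)%:Z)) E)).
rewrite (scale_lin hml x hi) !tr_scale tr_comp tr_id subrr mul0r /ksign /= scale1r.
done.
Qed.

Lemma term2 (m : cochain A 2) : m [::] tt = 0 -> forall s (x : args A s),
  ins (degC deg_ma) acoch m 0 (size s) x = ((1 - (sumz s + (2 - (size s)%:Z)))%:~R : F) *: m s x.
Proof.
move=> hm0 s x; rewrite /ins.
case: s x => [|j r] x /=.
  case: x; rewrite hm0; case: (@a_single _ [::] (0 : A (0 + (2 - 0%:Z))) tt erefl) => e ->.
  by rewrite !(scaler0, tr0).
case: x => x0 x' /=.
have hsz : size (drop (size r) r) = 0%N by rewrite size_drop subnn.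
case: (a_single (m (j :: take (size r) r) (x0, (split_args (size r) x').1)) (split_args (size r) x').2 hsz) => e ->.
case: (split_size x') => E' h'; rewrite h'.
rewrite -(castA_cons E' (congr1 (cons j) E')).
rewrite -(fcast m _ _ (congr1 (fun s => sumz s + (2 - (size s)%:Z)) (congr1 (cons j) E'))).
rewrite !tr_scale tr_comp tr_comp tr_id mulr0 /ksign /= scale1r.
by rewrite take_size.
Qed.

Lemma sum_nth (s : seq int) :
  \sum_(i < size s) ((1 - nth 0 s i)%:~R : F) = ((size s)%:Z - sumz s)%:~R.
Proof.
elim: s => [|j r IH]; first by rewrite big_ord0.
rewrite big_ord_recl /= IH -intrD; congr (_%:~R).
lia.
Qed.

Lemma scal_id (s : seq int) :
  \sum_(i < size s) ((1 - nth 0 s i)%:~R : F) - ((1 - (sumz s + (2 - (size s)%:Z)))%:~R) = 1.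
Proof.
rewrite sum_nth -intrB.
have -> : (size s)%:Z - sumz s - (1 - (sumz s + (2 - (size s)%:Z))) = 1 by lia.
by [].
Qed.

Lemma zero1 (m : cochain A 2) : multilinear m -> forall s (x : args A s) (i p : nat),
  p != 1%N -> (i < (size s).+1 - p)%N -> ins deg_ma m acoch i p x = 0.
Proof.
move=> hml s x i p hp hi; rewrite /ins a_zero; last first.
  rewrite size_take_min size_drop; apply/eqP; lia.
by rewrite ml0 // scaler0 tr0.
Qed.

Lemma zero2 (m : cochain A 2) : forall s (x : args A s) (i p : nat),
  (i < p)%N -> p != 1%N -> (p < (size s).+2)%N ->
  ins (degC deg_ma) acoch m i ((size s).+1 - p) x = 0.
Proof.
move=> s x i p hi hp hps; rewrite /ins a_zero; last first.
  rewrite size_cat size_take_min /= size_drop size_drop; apply/eqP; lia.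
by rewrite scaler0 tr0.
Qed.

End Main.

Theorem theorem1p9 (F : fieldType) (A : int -> lmodType F) (m : cochain A 2) :
  strict_Ainf m ->
  exists a : cochain A 1,
    multilinear a /\
    forall (s : seq int) (x : args A s), brk deg_ma m a x = m s x.
Proof.
case=> hml hm0 _.
exists (acoch (A := A)); split; first exact: acoch_ml.
move=> s x; rewrite /brk.
rewrite (bigD1 (inord 1)) //=.
rewrite [X in _ + X = _]big1 ?addr0; last first.
  move=> k hk.
  have hk' : (k : nat) != 1%N.
    by apply: contraNneq hk => h; apply/eqP/val_inj; rewrite /= inordK.
  rewrite big1; last by move=> i _; rewrite (zero1 hml x hk' (ltn_ord i)) scaler0.
  rewrite big1 ?scaler0 ?subrr //.
  by move=> i _; rewrite (zero2 m x (ltn_ord i) hk' (ltn_ord k)) scaler0.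
rewrite inordK // subSS subn0.
have k0 : ksign F 0 = 1 by [].
under eq_bigr => i _ do rewrite subrr !mulr0 !addr0 k0 scale1r (term1 hml x (ltn_ord i)).
rewrite big_ord1 /= subrr !mul0r mulr0 !addr0 k0 !scale1r (term2 hm0).
rewrite -scaler_suml -scalerBl.
by rewrite scal_id scale1r.
Qed.
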